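(* Consider the setting and algorithm described in the context, and assume: (A1) bounded delay: there is an integer $\tau\ge0$ such that for every $i\in[m]$ and $t\ge0$, $i\in\mathcal{A}_t\cup\cdots\cup\mathcal{A}_{\max\{t-\tau,0\}}$; (A2) each $\mathcal{L}_j$ is differentiable with $\|\nabla\mathcal{L}_j(x)-\nabla\mathcal{L}_j(y)\|\le L\|x-y\|$; (A3) each $\mathcal{L}_j$ is strongly convex with modulus $\sigma^2>0$: $\mathcal{L}_j(x)\ge\mathcal{L}_j(y)+\langle\nabla\mathcal{L}_j(y),x-y\rangle+\frac{\sigma^2}{2}\|x-y\|^2$ for all $x,y$. Let $\delta_1>0$ satisfy $\delta_1>(2L+\rho+1)/\sigma^2$. Then for every $t\ge0$, $\frac{1}{\frac{\rho}{2}(1+\delta_1)+\delta_1}\big(F(x^{t+1},x^t)-F(x^*,x^* )\big)\le\frac{\delta_1L+\frac{\rho}{2}(1+\delta_1)}{\frac{\rho}{2}(1+\delta_1)+\delta_1}\|x^t-x^{t+1}\|^2+\frac{1}{\frac{\rho}{2}(1+\delta_1)+\delta_1}\cdot\frac{\delta_1}{2m}L^2\sum_{j\in[m]}\|x^{t_j}-x^t\|^2.$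
   Context: Problem setting: integers $m\ge 2$, $n\ge1$, $p\ge1$. For $j\in[m]$, $i\in[n]$, $l_{ji}:\mathbb{R}^p\to\mathbb{R}$ are smooth loss functions; $h:\mathbb{R}^p\to\mathbb{R}\cup\{+\infty\}$ is proper, lower semicontinuous and convex. $\mathcal{L}_j(x)=\frac1n\sum_{i}l_{ji}(x)$, $\mathcal{L}(x)=\frac1m\sum_j\mathcal{L}_j(x)+h(x)$, and $x^*$ is the minimizer of $\mathcal{L}$. Machine 1 is the master. Algorithm EDANNI: given $x^0$ and $\rho\ge0$, at each iteration $t=0,1,\dots$ there is a set $\mathcal{A}_t\subseteq[m]$ of machines whose gradients arrive at iteration $t$, with $\mathcal{A}_0=[m]$; $t_j$ is the latest iteration $s\le t$ with $j\in\mathcal{A}_s$ (with $t_1=t$). The master updates $x^{t+1}=\arg\min_{x}\ \mathcal{L}_1(x)+h(x)+\frac{\rho}{2}\|x-x^t\|^2+\Big\langle \frac1m\sum_{j\in[m]}\nabla\mathcal{L}_j(x^{t_j})-\nabla\mathcal{L}_1(x^{t_1}),\,x-x^t\Big\rangle.$ Define $F(x,y)=\frac1m\sum_{j\in[m]}\mathcal{L}_j(x)+\frac{\rho}{2}\|x-y\|^2+h(x)$, so $F(x^*,x^* )=\mathcal{L}(x^* )$. *)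

(* Defs.v *)
From HB Require Import structures.
From mathcomp Require Import all_boot all_order all_algebra.
From mathcomp Require Import all_classical all_reals all_analysis.
Set Implicit Arguments. Unset Strict Implicit. Unset Printing Implicit Defensive.
Import Order.TTheory GRing.Theory Num.Theory.
Import numFieldNormedType.Exports.
Local Open Scope ring_scope.

Section Defs.
Context {R : realType} {p : nat}.
Local Notation V := 'rV[R]_p.

Definition dotv (u v : V) : R := \sum_(k < p) u ord0 k * v ord0 k.
Definition sqnorm (u : V) : R := dotv u u.
Definition enorm (u : V) : R := Num.sqrt (sqnorm u).

Definition is_gradient (f : V -> R) (g : V -> V) : Prop :=
  forall x : V, differentiable f x /\ forall v : V, 'd f x v = dotv (g x) v.

Definition proper_fun (h : V -> \bar R) : Prop :=
  (forall x, h x != -oo%E) /\ exists x, h x != +oo%E.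
Definition convex_efun (h : V -> \bar R) : Prop :=
  forall (x y : V) (a : R), 0 <= a <= 1 ->
    (h (a *: x + (1 - a) *: y)%R <= (a%:E * h x + (1 - a)%:E * h y))%E.
Definition lsc_efun (h : V -> \bar R) : Prop := lower_semicontinuous h.

End Defs.

(* Latest iteration s <= t at which machine j's gradient arrived;
   the master (index with value 0) always uses the current iterate. *)
Definition last_arrival {m : nat} (A : nat -> 'I_m -> bool) (t : nat) (j : 'I_m) : nat :=
  if val j == 0%N then t else (\max_(s < t.+1 | A s j) (val s))%N.

(* Main.v *)
Require Import Defs.
From HB Require Import structures.
From mathcomp Require Import all_boot all_order all_algebra.
From mathcomp Require Import all_classical all_reals all_analysis.
From mathcomp Require Import ring lra.
Import Order.TTheory GRing.Theory Num.Theory.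
Local Open Scope ring_scope.

Section H.
Context {R : realType} {p : nat}.
Local Notation V := 'rV[R]_p.
Implicit Types u v w : V.

Lemma dotvC u v : dotv u v = dotv v u.
Proof. by apply: eq_bigr => k _; rewrite mulrC. Qed.
Lemma dotvDl u w v : dotv (u + w) v = dotv u v + dotv w v.
Proof. by rewrite /dotv -big_split; apply: eq_bigr => k _; rewrite mxE mulrDl. Qed.
Lemma dotvNl u v : dotv (- u) v = - dotv u v.
Proof. by rewrite /dotv -sumrN; apply: eq_bigr => k _; rewrite mxE mulNr. Qed.
Lemma dotvBl u w v : dotv (u - w) v = dotv u v - dotv w v.
Proof. by rewrite dotvDl dotvNl. Qed.
Lemma dotvZl a u v : dotv (a *: u) v = a * dotv u v.
Proof. by rewrite /dotv big_distrr; apply: eq_bigr => k _; rewrite !mxE /= -mulrA.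
Qed.
Lemma dotvDr u w v : dotv v (u + w) = dotv v u + dotv v w.
Proof. by rewrite dotvC dotvDl !(dotvC v). Qed.
Lemma dotvNr u v : dotv v (- u) = - dotv v u.
Proof. by rewrite dotvC dotvNl dotvC. Qed.
Lemma dotvBr u w v : dotv v (u - w) = dotv v u - dotv v w.
Proof. by rewrite dotvDr dotvNr. Qed.
Lemma dotvZr a u v : dotv v (a *: u) = a * dotv v u.
Proof. by rewrite dotvC dotvZl dotvC. Qed.
Lemma dotv_suml m (f : 'I_m -> V) v :
  dotv (\sum_(j < m) f j) v = \sum_(j < m) dotv (f j) v.
Proof.
rewrite /dotv exchange_big /=; apply: eq_bigr => k _.
by rewrite summxE big_distrl.
Qed.
Lemma dotv0l v : dotv 0 v = 0.
Proof. by rewrite /dotv big1 // => k _; rewrite mxE mul0r. Qed.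

Lemma sqnorm_ge0 u : 0 <= sqnorm u.
Proof. by apply: sumr_ge0 => k _; rewrite -expr2 sqr_ge0. Qed.
Lemma enorm_ge0 u : 0 <= enorm u.
Proof. exact: sqrtr_ge0. Qed.
Lemma enorm_sq u : enorm u ^+ 2 = sqnorm u.
Proof. by rewrite /enorm sqr_sqrtr // sqnorm_ge0. Qed.
Lemma sqnormN u : sqnorm (- u) = sqnorm u.
Proof. by rewrite /sqnorm dotvNl dotvNr opprK. Qed.
Lemma enormN u : enorm (- u) = enorm u.
Proof. by rewrite /enorm sqnormN. Qed.

Lemma sqnorm0_dot u v : sqnorm u = 0 -> dotv u v = 0.
Proof.
move=> h0; rewrite /dotv big1 // => k _.
have H := @psumr_eq0P R _ predT (fun k => u ord0 k * u ord0 k).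
have := H (fun i _ => ltac:(by rewrite -expr2 sqr_ge0)) h0 k isT.
by move/eqP; rewrite mulf_eq0 orbb => /eqP ->; rewrite mul0r.
Qed.

Lemma CS u v : dotv u v <= enorm u * enorm v.
Proof.
set a := enorm u; set b := enorm v.
have ha : 0 <= a by exact: enorm_ge0.
have hb : 0 <= b by exact: enorm_ge0.
have h1 := sqnorm_ge0 (b *: u - a *: v).
rewrite /sqnorm !dotvBl !dotvBr !dotvZl !dotvZr in h1.
rewrite -/(sqnorm u) -/(sqnorm v) -!enorm_sq -/a -/b (dotvC v u) in h1.
have [hab|hab] := ltrP 0 (a * b).
  have : a * b * dotv u v <= a * b * (a * b) by nra.
  by rewrite ler_pM2l.
have : a * b = 0 by nra.
move/eqP; rewrite mulf_eq0 => /orP [] /eqP h.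
  rewrite sqnorm0_dot; first by rewrite h mul0r.
  by rewrite -enorm_sq -/a h expr0n.
rewrite dotvC sqnorm0_dot; first by rewrite h mulr0.
by rewrite -enorm_sq -/b h expr0n.
Qed.

Lemma enormD u v : enorm (u + v) <= enorm u + enorm v.
Proof.
have h := CS u v.
have h2 : enorm (u + v) ^+ 2 <= (enorm u + enorm v) ^+ 2.
  rewrite enorm_sq /sqnorm dotvDl !dotvDr (dotvC v u).
  rewrite -/(sqnorm u) -/(sqnorm v) -!enorm_sq; nra.
have := enorm_ge0 (u + v); have := enorm_ge0 u; have := enorm_ge0 v.
nra.
Qed.

Lemma enormB u v : enorm (u - v) <= enorm u + enorm v.
Proof. by rewrite -(enormN v); exact: enormD. Qed.
End H.

Lemma young (R : realType) (a b k : R) : 0 < k -> a * b <= k / 2 * a ^+ 2 + b ^+ 2 / (2 * k).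
Proof.
move=> k0.
have e : k / 2 * a ^+ 2 + b ^+ 2 / (2 * k) = a * b + (k * a - b) ^+ 2 / (2 * k).
  by field; rewrite gt_eqF.
by rewrite e lerDl divr_ge0 ?sqr_ge0 // mulr_ge0 // ltW.
Qed.

Lemma sqnorm0 (R : realType) (p : nat) : sqnorm (0 : 'rV[R]_p) = 0.
Proof. by rewrite /sqnorm dotv0l. Qed.

Theorem lemma4 (R : realType) (m n p : nat)
  (hm : (2 <= m)%N) (hn : (1 <= n)%N) (hp : (1 <= p)%N)
  (* machine 1 = the master, index with value 0 *)
  (i1 : 'I_m) (hi1 : val i1 = 0%N)
  (l : 'I_m -> 'I_n -> 'rV[R]_p -> R)
  (h : 'rV[R]_p -> \bar R)
  (hproper : proper_fun h) (hlsc : lsc_efun h) (hconv : convex_efun h)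
  (* L_j and its gradient *)
  (Lj : 'I_m -> 'rV[R]_p -> R)
  (hLj : forall j x, Lj j x = n%:R^-1 * \sum_(i < n) l j i x)
  (gL : 'I_m -> 'rV[R]_p -> 'rV[R]_p)
  (hgrad : forall j, is_gradient (Lj j) (gL j))
  (* A2: Lipschitz gradients *)
  (L : R) (hLip : forall j x y, enorm (gL j x - gL j y) <= L * enorm (x - y))
  (* A3: strong convexity with modulus sigma^2 > 0 *)
  (sigma : R) (hsigma : 0 < sigma ^+ 2)
  (hsc : forall j x y, Lj j x >= Lj j y + dotv (gL j y) (x - y)
                                 + sigma ^+ 2 / 2 * sqnorm (x - y))
  (* the minimizer x* of cal L = 1/m sum_j L_j + h *)
  (xstar : 'rV[R]_p)
  (hxstar : forall x : 'rV[R]_p,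
     ((m%:R^-1 * \sum_(j < m) Lj j xstar)%:E + h xstar
        <= (m%:R^-1 * \sum_(j < m) Lj j x)%:E + h x)%E)
  (* EDANNI *)
  (rho : R) (hrho : 0 <= rho)
  (A : nat -> 'I_m -> bool) (hA0 : forall j, A 0%N j)
  (* A1: bounded delay *)
  (tau : nat)
  (hdelay : forall (i : 'I_m) (t : nat),
     exists s : nat, (t - tau <= s)%N /\ (s <= t)%N /\ A s i)
  (x : nat -> 'rV[R]_p)
  (hupdate : forall (t : nat) (z : 'rV[R]_p),
     let G := m%:R^-1 *: \sum_(j < m) gL j (x (last_arrival A t j))
              - gL i1 (x (last_arrival A t i1)) in
     ((Lj i1 (x t.+1) + rho / 2 * sqnorm (x t.+1 - x t) + dotv G (x t.+1 - x t))%:E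
        + h (x t.+1)
      <= (Lj i1 z + rho / 2 * sqnorm (z - x t) + dotv G (z - x t))%:E + h z)%E)
  (delta1 : R) (hdelta0 : 0 < delta1)
  (hdelta : (2 * L + rho + 1) / sigma ^+ 2 < delta1) :
  let F := fun (u v : 'rV[R]_p) =>
    ((m%:R^-1 * \sum_(j < m) Lj j u + rho / 2 * sqnorm (u - v))%:E + h u)%E in
  let c := rho / 2 * (1 + delta1) + delta1 in
  forall t : nat,
    ((c^-1)%:E * (F (x t.+1) (x t) - F xstar xstar)
     <= ((delta1 * L + rho / 2 * (1 + delta1)) / c * sqnorm (x t - x t.+1)
         + c^-1 * (delta1 / (2 * m%:R)) * L ^+ 2
           * \sum_(j < m) sqnorm (x (last_arrival A t j) - x t))%:E)%E.

Proof.
move=> F c t.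
pose y := x t.+1; pose xt := x t.
pose tj := fun j => last_arrival A t j.
have hti1 : last_arrival A t i1 = t by rewrite /last_arrival hi1 eqxx.
have hL : 0 <= L.
  pose one : 'rV[R]_p := const_mx 1.
  have hs1 : sqnorm one = p%:R.
    rewrite /sqnorm /dotv; under eq_bigr do rewrite mxE mul1r.
    by rewrite sumr_const card_ord.
  have := hLip i1 one 0; rewrite subr0.
  have := enorm_ge0 (gL i1 one - gL i1 0).
  have : 0 < enorm one by rewrite /enorm hs1 sqrtr_gt0 ltr0n.
  move=> h1 h2 h3; nra.
case: hproper => hninf [x0 hx0].
have [r0 H0] : exists r, h x0 = r%:E.
  case H0 : (h x0) => [r| |]; first by exists r.
    by rewrite H0 in hx0.
  by have := hninf x0; rewrite H0.
have [hs Hs] : exists r, h xstar = r%:E.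
  case Hs : (h xstar) => [r| |]; first by exists r.
    by have := hxstar x0; rewrite Hs H0.
  by have := hninf xstar; rewrite Hs.
have [hy Hy] : exists r, h y = r%:E.
  case Hy : (h y) => [r| |]; first by exists r.
    by have := hupdate t x0; rewrite /= -/y Hy H0.
  by have := hninf y; rewrite Hy.
pose u := xstar - y; pose d := y - xt.
pose G := m%:R^-1 *: \sum_(j < m) gL j (x (tj j)) - gL i1 xt.
pose X := dotv (gL i1 y + rho *: d + G) u.
pose K := L + rho / 2.
have hstep : forall s, 0 < s <= 1 -> hy - hs <= X + s * (K * sqnorm u).
  move=> s /andP [s0 s1].
  pose z := s *: xstar + (1 - s) *: y.
  have ezy : z - y = s *: u.
    by rewrite /z /u scalerBl scale1r scalerBr addrCA addrAC subrr add0r.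
  have ezx : z - xt = (z - y) + d by rewrite /d addrA subrK.
  have hz := hconv xstar y s (ltac:(by rewrite (ltW s0) s1)).
  have hu := hupdate t z; cbv zeta in hu.
  rewrite hti1 -/y -/xt -/G -/d Hy in hu.
  rewrite -/z Hs Hy in hz.
  case Hz : (h z) => [hzr| |]; last by have := hninf z; rewrite Hz.
    2: by move: hz; rewrite Hz.
  rewrite Hz -!EFinD lee_fin in hu.
  rewrite Hz -!EFinM -EFinD lee_fin in hz.
  have e1 : forall a, dotv a (z - y) = s * dotv a u by move=> a; rewrite ezy dotvZr.
  have e2 : sqnorm (z - y) = s * s * sqnorm u by rewrite ezy /sqnorm dotvZl dotvZr mulrA.
  have h2 : dotv (gL i1 z - gL i1 y) (z - y) <= L * sqnorm (z - y).
    apply: le_trans (CS _ _) _; rewrite -enorm_sq expr2 mulrA ler_wpM2r ?enorm_ge0 //.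
  have h1 : Lj i1 z - Lj i1 y <= dotv (gL i1 z) (z - y).
    have := hsc i1 y z; have eyz : y - z = - (z - y) by rewrite opprB.
    rewrite eyz dotvNr sqnormN => H.
    have : 0 <= sigma^+2/2 * sqnorm (z - y) by rewrite mulr_ge0 ?divr_ge0 ?sqnorm_ge0 ?ltW.
    lra.
  have e3 : dotv (gL i1 z) (z - y) = dotv (gL i1 y) (z - y) + dotv (gL i1 z - gL i1 y) (z - y).
    by rewrite dotvBl addrCA subrr addr0.
  have e4 : sqnorm (z - xt) = sqnorm (z - y) + 2 * dotv d (z - y) + sqnorm d.
    rewrite ezx; move: (z - y) => w; rewrite /sqnorm dotvDl (dotvDr w d w) (dotvDr w d d) (dotvC w d); ring.
  have e5 : dotv G (z - xt) = dotv G (z - y) + dotv G d by rewrite ezx (dotvDr (z - y) d G).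
  have eX : X = dotv (gL i1 y) u + rho * dotv d u + dotv G u by rewrite /X (dotvDl (gL i1 y + rho *: d) G u) (dotvDl (gL i1 y) (rho *: d) u) dotvZl.
  rewrite e4 e5 in hu; rewrite e3 in h1.
  rewrite !e1 e2 in h1 h2 hu.
  have : s * (hy - hs) <= s * (X + s * (K * sqnorm u)) by rewrite eX /K; nra.
  by rewrite ler_pM2l.
have hK : 0 <= K by rewrite /K; lra.
have hXle : hy - hs <= X.
  rewrite leNgt; apply/negP => hlt.
  have hM : 0 <= K * sqnorm u by rewrite mulr_ge0 ?sqnorm_ge0.
  move: hstep hM; set M := K * sqnorm u => hstep hM.
  have he : 0 < hy - hs - X by lra.
  move: he; set e := hy - hs - X => he.
  have ee : e = hy - hs - X by [].
  have hem : 0 < e + M by lra.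
  have hsd : (e + M) * (e / (e + M)) = e by rewrite mulrC divfK // gt_eqF.
  have hs0 : 0 < e / (e + M) by rewrite divr_gt0.
  have hs1 : e / (e + M) <= 1 by rewrite ler_pdivrMr // mul1r; lra.
  have := hstep (e / (e + M)) (ltac:(by rewrite hs0 hs1)).
  move: hsd hs0; set s := e / (e + M) => hsd hs0.
  nra.
have hc : 0 < c by rewrite /c; have := hdelta0; nra.
rewrite /F -/y -/xt Hy Hs subrr sqnorm0 -!EFinD -EFinM lee_fin.
have -> : sqnorm (xt - y) = sqnorm d by rewrite /d -sqnormN opprB.
rewrite -/d mulr0 addr0.
set S := \sum_(j < m) sqnorm (x (last_arrival A t j) - xt).
set K' := delta1 * L + rho / 2 * (1 + delta1).
have -> : K' / c * sqnorm d + c^-1 * (delta1 / (2 * m%:R)) * L ^+ 2 * S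
   = c^-1 * (K' * sqnorm d + delta1 / (2 * m%:R) * L ^+ 2 * S) by ring.
rewrite ler_pM2l ?invr_gt0 //.
have hm0 : 0 < m%:R :> R by rewrite ltr0n; apply: leq_trans hm.
pose mi : R := m%:R^-1.
have hmi : mi * m%:R = 1 by rewrite /mi mulVf // gt_eqF.
have hmi0 : 0 <= mi by rewrite /mi invr_ge0 ltW.
pose Dn := enorm d; pose Un := enorm u.
have hDn : 0 <= Dn := enorm_ge0 d.
have hUn : 0 <= Un := enorm_ge0 u.
have eD : sqnorm d = Dn ^+ 2 by rewrite enorm_sq.
have eU : sqnorm u = Un ^+ 2 by rewrite enorm_sq.
pose P1 := \sum_(j < m) dotv (gL j (x (tj j))) u.
pose P2 := \sum_(j < m) dotv (gL j y) u.
have F1 : \sum_(j < m) (Lj j y - Lj j xstar) <= - P2 - m%:R * (sigma ^+ 2 / 2 * sqnorm u).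
  apply: le_trans (_ : \sum_(j < m) (- dotv (gL j y) u - sigma ^+ 2 / 2 * sqnorm u) <= _).
    apply: ler_sum => j _; have := hsc j xstar y; rewrite -/u; lra.
  by rewrite big_split /= sumrN sumr_const card_ord mulNrn mulr_natl.
have F1' : mi * \sum_(j < m) (Lj j y - Lj j xstar) <= - (mi * P2) - sigma ^+ 2 / 2 * sqnorm u.
  have := ler_wpM2l hmi0 F1.
  have -> : mi * (- P2 - m%:R * (sigma ^+ 2 / 2 * sqnorm u))
     = - (mi * P2) - (mi * m%:R) * (sigma ^+ 2 / 2 * sqnorm u) by ring.
  by rewrite hmi mul1r.
have eX : X = dotv (gL i1 y) u + rho * dotv d u + mi * P1 - dotv (gL i1 xt) u.
  rewrite /X (dotvDl (gL i1 y + rho *: d) G u) (dotvDl (gL i1 y) (rho *: d) u) dotvZl.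
  by rewrite /G (dotvBl (m%:R^-1 *: _) (gL i1 xt) u) (dotvZl m%:R^-1) dotv_suml addrA.
pose W := L * Dn * Un + sqnorm u / (2 * delta1).
have F3 : P1 - P2 <= m%:R * W + delta1 / 2 * L ^+ 2 * S.
  rewrite /P1 /P2 -sumrB.
  apply: le_trans (_ : \sum_(j < m) (W + delta1 / 2 * L ^+ 2 * sqnorm (x (tj j) - xt)) <= _).
    apply: ler_sum => j _.
    rewrite -dotvBl.
    have e1 : x (tj j) - y = (x (tj j) - xt) - d by rewrite /d opprB addrA subrK.
    have h1 := CS (gL j (x (tj j)) - gL j y) u.
    have h2 := ler_wpM2r hUn (hLip j (x (tj j)) y).
    have h3 := enormB (x (tj j) - xt) d.
    rewrite -e1 in h3.
    have h4 := ler_wpM2l hL h3.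
    have h5 := ler_wpM2r hUn h4.
    have h6 := @young R (L * enorm (x (tj j) - xt)) Un delta1 hdelta0.
    rewrite -/Un -/Dn in h1 h2 h5.
    rewrite /W eU -enorm_sq.
    have e7 : (L * enorm (x (tj j) - xt)) ^+ 2 = L ^+ 2 * enorm (x (tj j) - xt) ^+ 2 by rewrite exprMn.
    rewrite e7 in h6.
    nra.
  by rewrite big_split /= sumr_const card_ord mulr_natl -big_distrr.
have F3' : mi * P1 - mi * P2 <= W + delta1 / (2 * m%:R) * L ^+ 2 * S.
  have := ler_wpM2l hmi0 F3.
  have -> : mi * (m%:R * W + delta1 / 2 * L ^+ 2 * S)
     = (mi * m%:R) * W + delta1 / (2 * m%:R) * L ^+ 2 * S.
    by rewrite /mi; field; rewrite gt_eqF.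
  rewrite hmi mul1r mulrBr; lra.
have F4 : dotv (gL i1 y) u - dotv (gL i1 xt) u <= L * Dn * Un.
  rewrite -dotvBl; apply: le_trans (CS _ _) _.
  by rewrite ler_wpM2r // hLip.
have F5 : rho * dotv d u <= rho * (Dn * Un) by rewrite ler_wpM2l // CS.
have hY : (2 * L + rho) * (Dn * Un) <= (2 * L + rho) * (delta1 / 2 * Dn ^+ 2 + Un ^+ 2 / (2 * delta1)).
  by rewrite ler_wpM2l ?young //; lra.
have hq : (2 * L + rho + 1) / (2 * delta1) <= sigma ^+ 2 / 2.
  rewrite ler_pdivrMr ?mulr_gt0 //.
  have := hdelta; rewrite ltr_pdivrMr // => hh; nra.
have hq2 := ler_wpM2r (sqnorm_ge0 u) hq.
have eq3 : (2 * L + rho + 1) / (2 * delta1) * sqnorm u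
   = (2 * L + rho) * (Un ^+ 2 / (2 * delta1)) + sqnorm u / (2 * delta1).
  by rewrite eU; field; rewrite gt_eqF.
rewrite eq3 in hq2.
have hsum : mi * \sum_(j < m) Lj j y - mi * \sum_(j < m) Lj j xstar
   = mi * \sum_(j < m) (Lj j y - Lj j xstar) by rewrite sumrB mulrBr.
rewrite -/mi.
rewrite eX in hXle.
rewrite /W in F3'.
rewrite /K'.
rewrite -eD in hY.
clear F1 F3 hstep eq3 hq.
lra.
Qed.
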